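(* Let $H \in \mathcal{M}_n(\mathbb{R})$ be a (real) positive semidefinite matrix whose least eigenvalue is simple. Then $H$ has exactly $k$ distinct eigenvalues, where $2 \le k \le n$, if and only if there are $k$ distinct real numbers $\mu_1, \ldots, \mu_k$ such that (i) $H - \mu_i I$ is a singular matrix for every $1 \le i \le k-1$; and (ii) $\prod_{i=1}^{k-1}(H - \mu_i I) = \frac{\prod_{i=1}^{k-1}(\mu_k - \mu_i)}{\|\alpha\|^2}\,\alpha\alpha^T$ and $H\alpha = \mu_k\alpha$ for some $\alpha \in \mathbb{R}^n\setminus\{\mathbf{0}\}$. Moreover, in this case $\mu_1, \ldots, \mu_k$ are exactly the $k$ distinct eigenvalues of $H$.
   Context: $I$ is the identity matrix and $\|\alpha\|^2 = \alpha^T\alpha$ is the squared Euclidean norm. A simple eigenvalue is one of algebraic multiplicity $1$. *)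

(* Defs.v *)
From HB Require Import structures.
From mathcomp Require Import all_boot all_order all_algebra.
From mathcomp Require Import all_classical all_reals.
Set Implicit Arguments. Unset Strict Implicit. Unset Printing Implicit Defensive.
Import Order.TTheory GRing.Theory Num.Theory.
Local Open Scope ring_scope.

Definition psd (R : realType) (n : nat) (H : 'M[R]_n) : Prop :=
  H^T = H /\ forall x : 'cV[R]_n, 0 <= (x^T *m H *m x) 0 0.

Definition alg_mult (R : realType) (n : nat) (H : 'M[R]_n) (a : R) : nat :=
  mup a (char_poly H).

Definition least_eig_simple (R : realType) (n : nat) (H : 'M[R]_n) : Prop :=
  exists l : R, eigenvalue H l /\ (forall b, eigenvalue H b -> l <= b)
                /\ alg_mult H l = 1%N.

Definition eig_list (R : realType) (n : nat) (H : 'M[R]_n) (s : seq R) : Prop :=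
  uniq s /\ forall a : R, eigenvalue H a <-> a \in s.

Definition num_distinct_eigs (R : realType) (n : nat) (H : 'M[R]_n) (k : nat) : Prop :=
  exists s : seq R, eig_list H s /\ size s = k.

Definition sqnorm (R : realType) (n : nat) (a : 'cV[R]_n) : R := (a^T *m a) 0 0.

(* Conditions (i) and (ii) for mu = [mu_1; ...; mu_k] (0-indexed in the seq). *)
Definition cond_mu (R : realType) (n k : nat) (H : 'M[R]_n) (mu : seq R) : Prop :=
  [/\ size mu = k, uniq mu,
      (forall i : nat, (i < k.-1)%N -> (H - (mu`_i)%:M) \notin unitmx) &
      exists alpha : 'cV[R]_n, alpha != 0 /\
        \prod_(i < k.-1) (H - (mu`_i)%:M)
          = ((\prod_(i < k.-1) (mu`_(k.-1) - mu`_i)) / sqnorm alpha)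
              *: (alpha *m alpha^T)
        /\ H *m alpha = mu`_(k.-1) *: alpha].

(* Main.v *)
Require Import Defs.
From HB Require Import structures.
From mathcomp Require Import all_boot all_order all_algebra.
From mathcomp Require Import all_classical all_reals.
From mathcomp Require Import complex.
Import Order.TTheory GRing.Theory Num.Theory.
Local Open Scope ring_scope.
Local Open Scope sesquilinear_scope.
Section S0.
Lemma diag_row_mul (F : comNzRingType) n (f h : 'I_n -> F) :
  diag_mx (\row_j (f j * h j)) = diag_mx (\row_j f j) *m diag_mx (\row_j h j).
Proof. by rewrite mulmx_diag; congr diag_mx; apply/rowP => j; rewrite !mxE. Qed.
Lemma key (C : numClosedFieldType) n (P : 'M[C]_n) (d : 'rV[C]_n) (Hc : 'M[C]_n)
   (a : 'cV[C]_n) (l : C) (i0 : 'I_n) m (g : 'I_m -> C) :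
 P \is unitarymx -> Hc = invmx P *m diag_mx d *m P ->
 a != 0 -> Hc *m a = l *: a -> d 0 i0 = l ->
 (forall j, j != i0 -> d 0 j != l /\ exists i, g i = d 0 j) ->
 \prod_(i < m) (Hc - (g i)%:M) =
   ((\prod_(i < m) (l - g i)) / (a^t* *m a) 0 0) *: (a *m a^t*).
Proof.
move=> Pu HE a0 Ha di0 dj.
have Pun := unitarymx_unit Pu.
set Pi := invmx P.
have PiP : Pi *m P = 1%:M by rewrite mulVmx.
have PPi : P *m Pi = 1%:M by rewrite mulmxV.
set r := \row_j \prod_(i < m) (d 0 j - g i).
have Hprod : \prod_(i < m) (Hc - (g i)%:M) = Pi *m diag_mx r *m P.
  rewrite /r; clear dj r; elim: m g => [|m IH] g.
    rewrite big_ord0; rewrite (_ : \row_j _ = const_mx 1); last first.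
      by apply/rowP => j; rewrite !mxE big_ord0.
    by rewrite diag_const_mx -mulmxA mul_scalar_mx scale1r PiP.
  rewrite big_ord_recl IH.
  have -> : \row_j \prod_(i < m.+1) (d 0 j - g i) = \row_j ((d 0 j - g ord0) * \prod_(i < m) (d 0 j - g (lift ord0 i))).
    by apply/rowP => j; rewrite !mxE big_ord_recl.
  rewrite diag_row_mul -mulmxE.
  have -> : Hc - (g ord0)%:M = Pi *m diag_mx (\row_j (d 0 j - g ord0)) *m P.
    have eg : (g ord0)%:M = Pi *m (g ord0)%:M *m P :> 'M_n.
      by rewrite mul_mx_scalar -scalemxAl PiP scalemx1.
    rewrite HE -/Pi eg -mulmxBl -mulmxBr; congr (_ *m _ *m _).
    by apply/matrixP => i j; rewrite !mxE; case: (i == j); rewrite ?mulr1n ?mulr0n ?subrr.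
  by rewrite !mulmxA -(mulmxA _ P Pi) PPi mulmx1.
rewrite Hprod.
set b := P *m a.
have ab : a = Pi *m b by rewrite /b mulmxA PiP mul1mx.
have Hb : diag_mx d *m b = l *: b.
  rewrite /b scalemxAr -Ha HE -/Pi !mulmxA.
  by rewrite PPi mul1mx.
have bj0 : forall j, j != i0 -> b j 0 = 0.
  move=> j /dj [dl _]; have /matrixP/(_ j 0) := Hb.
  rewrite mul_diag_mx !mxE => /eqP; rewrite -subr_eq0 -mulrBl mulf_eq0 subr_eq0.
  by rewrite (negbTE dl) => /eqP.
have bi0 : b i0 0 != 0.
  apply/negP => /eqP bz; move: a0; rewrite ab.
  have -> : b = 0; last by rewrite mulmx0 eqxx.
  apply/matrixP => j k; rewrite ord1 [RHS]mxE; have [->|] := eqVneq j i0; first exact: bz.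
  exact: bj0.
have adjM : forall (m1 m2 m3 : nat) (A : 'M[C]_(m1, m2)) (B : 'M[C]_(m2, m3)),
    (A *m B)^t* = B^t* *m A^t*.
  by move=> m1 m2 m3 A B; rewrite trmx_mul map_mxM.
have Pit : Pi^t* = P by rewrite /Pi invmx_unitary // trmxCK.
have at_ : a^t* = b^t* *m P by rewrite ab adjM Pit.
have ata : a^t* *m a = b^t* *m b by rewrite at_ ab mulmxA -(mulmxA _ P Pi) PPi mulmx1.
clearbody b.
rewrite ata at_ ab mulmxA -(mulmxA Pi b).
have btb : (b^t* *m b) 0 0 = Num.conj (b i0 0) * b i0 0.
  rewrite mxE (bigD1 i0) //= big1 ?addr0; first by rewrite !mxE.
  by move=> j /bj0; rewrite !mxE => ->; rewrite mulr0.
rewrite btb scalemxAl scalemxAr; congr (_ *m _ *m _).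
apply/matrixP => i j; rewrite !mxE big_ord1 !mxE.
have ri0 : \prod_(i < m) (d 0 i0 - g i) = \prod_(i < m) (l - g i) by rewrite di0.
have [->|ni] := eqVneq i i0.
  have [->|nj] := eqVneq j i0.
    rewrite mulr1n ri0 -mulrA; apply/esym; rewrite mulrC -mulrA.
    rewrite mulrA [b i0 ord0 * _]mulrC mulVf ?mul1r //.
    by rewrite mulf_neq0 // conjC_eq0.
  by rewrite (bj0 j nj) conjC0 !mulr0; exact: mulr0n.
rewrite (bj0 i ni) mul0r mulr0.
case: eqP => [eij|nij]; last exact: mulr0n.
rewrite mulr1n; have [_ [k gk]] := dj i ni.
by rewrite (bigD1 k) //= gk subrr mul0r.
Qed.

End S0.
Lemma char_poly_conj (F : fieldType) n (A P : 'M[F]_n) : P \in unitmx ->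
  char_poly (invmx P *m A *m P) = char_poly A.
Proof.
move=> Pu; rewrite /char_poly /char_poly_mx.
have e1 : map_mx (@polyC F) (invmx P) *m map_mx (@polyC F) P = 1%:M
  by rewrite -map_mxM mulVmx // map_mx1.
have -> : 'X%:M - map_mx (@polyC F) (invmx P *m A *m P) =
   map_mx (@polyC F) (invmx P) *m ('X%:M - map_mx (@polyC F) A) *m map_mx (@polyC F) P.
  rewrite !map_mxM mulmxBr mulmxBl; congr (_ - _).
  by rewrite mul_mx_scalar -scalemxAl e1 -mul_mx_scalar mul1mx.
rewrite !det_mulmx mulrC mulrA -det_mulmx.
by rewrite -map_mxM mulmxV // map_mx1 det1 mul1r.
Qed.
Section S.
Variable R : realType.
Local Notation toC := (real_complex R).
Lemma real_spectral n (H : 'M[R]_n) : H^T = H ->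
  exists (P : 'M[R[i]]_n) (e : 'rV[R]_n),
    P \is unitarymx /\ map_mx toC H = invmx P *m diag_mx (map_mx toC e) *m P.
Proof.
move=> HT; set Hc := map_mx toC H.
have Hh : Hc \is hermsymmx.
  apply: realsym_hermsym.
    apply/is_hermitianmxP; rewrite expr0 scale1r map_mx_id // /Hc map_trmx HT //.
  apply/mxOverP => i j; rewrite mxE; apply/complex_realP; by eexists.
have dreal := hermitian_spectral_diag_real Hh.
exists (spectralmx Hc), (map_mx (@complex.Re R) (spectral_diag Hc)); split.
  exact: spectral_unitarymx.
have -> : map_mx toC (map_mx (@complex.Re R) (spectral_diag Hc)) = spectral_diag Hc.
  apply/matrixP => i j; rewrite !mxE; apply: RRe_real; exact: (mxOverP dreal).
exact/orthomx_spectralP/hermitian_normalmx.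
Qed.
Lemma char_split n (H : 'M[R]_n) (P : 'M[R[i]]_n) (e : 'rV[R]_n) :
  P \is unitarymx -> map_mx toC H = invmx P *m diag_mx (map_mx toC e) *m P ->
  char_poly H = \prod_(i < n) ('X - (e 0 i)%:P).
Proof.
move=> Pu HE; apply: (@map_poly_inj _ _ toC).
rewrite map_char_poly HE char_poly_conj ?unitarymx_unit //.
rewrite char_poly_trig ?diag_mx_is_trig // map_prod_XsubC.
by apply: eq_bigr => i _; rewrite !mxE eqxx mulr1n.
Qed.
Lemma eig_col n (H : 'M[R]_n) a : H^T = H ->
  eigenvalue H a <-> exists v : 'cV[R]_n, v != 0 /\ H *m v = a *: v.
Proof.
move=> HT; split.
  move=> /eigenvalueP [v vH v0]; exists v^T; split; first by rewrite trmx_eq0.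
  by rewrite -{1}HT -trmx_mul vH linearZ.
move=> [v [v0 Hv]]; apply/eigenvalueP; exists v^T; last by rewrite trmx_eq0.
by rewrite -{1}HT -trmx_mul Hv linearZ.
Qed.

Lemma eig_unit n (H : 'M[R]_n) a : eigenvalue H a = (H - a%:M \notin unitmx).
Proof. by rewrite /eigenvalue /eigenspace -row_free_unit -kermx_eq0. Qed.

Lemma prod_apply n (H : 'M[R]_n) (v : 'cV[R]_n) a m (g : 'I_m -> R) :
  H *m v = a *: v ->
  (\prod_(i < m) (H - (g i)%:M)) *m v = (\prod_(i < m) (a - g i)) *: v.
Proof.
move=> Hv; elim: m g => [|m IH] g.
  by rewrite !big_ord0 mul1mx scale1r.
rewrite !big_ord_recl -mulmxE -mulmxA IH -scalemxAr mulmxBl Hv mul_scalar_mx.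
by rewrite -scalerBl scalerA mulrC.
Qed.

Lemma map_prod_mx n m (H : 'M[R]_n) (g : 'I_m -> R) :
  map_mx toC (\prod_(i < m) (H - (g i)%:M)) =
  \prod_(i < m) (map_mx toC H - (toC (g i))%:M).
Proof.
elim: m g => [|m IH] g; first by rewrite !big_ord0 map_mx1.
by rewrite !big_ord_recl -!mulmxE map_mxM IH map_mxB map_scalar_mx.
Qed.

Lemma conv n (H : 'M[R]_n) k mu : H^T = H -> (1 <= k)%N -> cond_mu k H mu -> eig_list H mu.
Proof.
move=> HT k1 [smu umu sing [al [al0 [Hprod Hal]]]]; split => // a; split; last first.
  move=> /(nthP 0) [i ilt <-]; rewrite smu in ilt.
  have [ik|] := ltnP i k.-1; first by rewrite eig_unit; exact: sing.
  move=> ki; have -> : i = k.-1 by apply/eqP; rewrite eqn_leq ki andbT -ltnS prednK.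
  by apply/(eig_col _ _ _ HT); exists al.
move=> /(eig_col _ _ _ HT) [v [v0 Hv]].
apply/negPn/negP => anin.
have kk : (k.-1 < size mu)%N by rewrite smu prednK.
have ne : forall i : 'I_k.-1, a - mu`_i != 0.
  move=> i; rewrite subr_eq0; apply/eqP => ae; move: anin; rewrite ae mem_nth //.
  by rewrite smu (leq_trans (ltn_ord i)) // leq_pred.
have := @prod_apply _ H v a k.-1 (fun i : 'I_k.-1 => mu`_i) Hv.
rewrite Hprod -scalemxAl -mulmxA => e.
have pa0 : \prod_(i < k.-1) (a - mu`_i) != 0 by apply/prodf_neq0 => i _; exact: ne.
have vE : v = ((\prod_(i < k.-1) (a - mu`_i))^-1 *
   ((\prod_(i < k.-1) (mu`_(k.-1) - mu`_i) / sqnorm al) * (al^T *m v) 0 0)) *: al.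
  rewrite [al^T *m v]mx11_scalar mul_mx_scalar scalerA in e.
  by rewrite -scalerA e scalerA mulVf // scale1r.
have : a = mu`_(k.-1).
  move: Hv; rewrite {1}vE -scalemxAr Hal scalerA mulrC -scalerA -vE => /eqP.
  rewrite -subr_eq0 -scalerBl scaler_eq0 (negbTE v0) orbF subr_eq0 => /eqP ->.
  done.
by move=> ae; move: anin; rewrite ae mem_nth.
Qed.

Lemma fwd n (H : 'M[R]_n) k (s : seq R) : H^T = H -> least_eig_simple H ->
  (2 <= k)%N -> eig_list H s -> size s = k -> exists mu, cond_mu k H mu.
Proof.
move=> HT [l [ll [lmin lm1]]] k2 [us seig] sk.
have [P [e [Pu HE]]] := real_spectral _ _ HT.
have chi := char_split _ _ _ _ Pu HE.
have eigE : forall x, eigenvalue H x = [exists i, e 0 i == x].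
  move=> x; rewrite eigenvalue_root_char chi /root horner_prod.
  apply/prodf_eq0/existsP => [[i _]|[i /eqP ei]].
    by rewrite hornerXsubC subr_eq0 eq_sym => ?; exists i.
  by exists i => //; rewrite hornerXsubC ei subrr.
have /existsP [i0 /eqP ei0] : [exists i, e 0 i == l] by rewrite -eigE.
have ej : forall j, j != i0 -> e 0 j != l.
  move=> j ji; apply/negP => /eqP ejl.
  have : (2 <= mup l (char_poly H))%N.
    rewrite mup_geq ?monic_neq0 ?char_poly_monic // chi (bigD1 i0) //=.
    rewrite (bigD1 j) //= mulrA ei0 ejl -expr2; exact: dvdp_mulIl.
  by move: lm1; rewrite /alg_mult => ->.
have lins : l \in s by apply/seig.
set s' := rem l s.
have ss' : size s' = k.-1 by rewrite size_rem // sk.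
have ms' : forall x, (x \in s') = (x != l) && (x \in s).
  by move=> x; rewrite (mem_rem_uniq _ us) inE.
have k0 : (0 < k)%N by apply: leq_trans k2.
have [al [al0 Hal]] := (eig_col _ _ _ HT).1 ll.
have mul : (rcons s' l)`_(k.-1) = l by rewrite nth_rcons ss' ltnn eqxx.
have mui : forall i, (i < k.-1)%N -> (rcons s' l)`_i = s'`_i.
  by move=> i ik; rewrite nth_rcons ss' ik.
exists (rcons s' l); split.
- by rewrite size_rcons ss' prednK.
- by rewrite rcons_uniq ms' eqxx /= rem_uniq.
- move=> i ik; rewrite mui // -eig_unit; apply/seig.
  have : s'`_i \in s' by rewrite mem_nth // ss'.
  by rewrite ms' => /andP [].
exists al; split => //; split; last by rewrite mul.
rewrite mul; apply: (@map_mx_inj _ _ toC).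
rewrite map_prod_mx.
have alT : (map_mx toC al) ^t* = map_mx toC al^T.
  by apply/matrixP => i j; rewrite !mxE; exact: conjc_real.
rewrite (@key _ _ P (map_mx toC e) _ (map_mx toC al) (toC l) i0 _ _ Pu HE).
  rewrite !alT map_mxZ map_mxM; congr (_ *: _).
  rewrite fmorph_div rmorph_prod /sqnorm -map_mxM mxE; congr (_ / _).
  by apply: eq_bigr => i _; rewrite rmorphB.
- by rewrite map_mx_eq0.
- by rewrite -map_mxM Hal map_mxZ.
- by rewrite mxE ei0.
move=> j ji; rewrite mxE; split; first by rewrite (inj_eq (@complexI R)) ej.
have ejs : e 0 j \in s' by rewrite ms' ej //=; apply/seig; rewrite eigE; apply/existsP; exists j.
have ik : leq (index (e 0 j) s').+1 k.-1 by rewrite -ss' index_mem.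
by exists (Ordinal ik) => /=; rewrite mui // nth_index.
Qed.

End S.
Close Scope sesquilinear_scope.

Theorem corollary4p3 (R : realType) (n : nat) (H : 'M[R]_n) (k : nat) :
  psd H -> least_eig_simple H -> (2 <= k)%N -> (k <= n)%N ->
  (num_distinct_eigs H k <-> exists mu : seq R, cond_mu k H mu) /\
  (forall mu : seq R, cond_mu k H mu -> eig_list H mu).
Proof.
move=> [HT _] hl k2 _.
have k1 : (1 <= k)%N by apply: leq_trans k2.
split; last by move=> mu; apply: (conv _ _ _ _ _ HT k1).
split.
  by move=> [s [hs sk]]; exact: (fwd _ _ _ _ _ HT hl k2 hs sk).
move=> [mu hmu]; exists mu; split; first exact: (conv _ _ _ _ _ HT k1 hmu).
by case: hmu.
Qed.
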